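(* Let $p,k\in\mathbb N$ and a real $\alpha<1$ be fixed. Let $X$ be a set of cardinality $r$ and, for every $p$-subset $S\in\binom{X}{p}$, let $\mathcal L_S$ be a collection of $p$-subsets of $X$ with $|\mathcal L_S|\leq k$. Suppose that no $p$-subset of $X$ belongs to more than $r^\alpha$ of the collections $\mathcal L_S$. Then, when $r$ is sufficiently large (in terms of $p,k,\alpha$), a uniformly random permutation $\sigma$ of $X$ satisfies $\sigma(S)\notin\mathcal L_S$ for every $S\in\binom Xp$ with probability at least $\left(1-2k/\binom rp\right)^{\binom rp}$, and this lower bound equals $e^{-2k}+o(1)$ as $r\to\infty$.
   Context: $\binom{X}{p}$ denotes the set of all $p$-element subsets of $X$, and $\sigma(S)=\{\sigma(x):x\in S\}$. *)

(* Defs.v *)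
From mathcomp Require Import all_boot fingroup perm.
From Stdlib Require Import Reals.
Set Implicit Arguments. Unset Strict Implicit. Unset Printing Implicit Defensive.

Definition good_perms (T : finType) (p : nat) (L : {set T} -> {set {set T}}) :
  {set {perm T}} :=
  [set s : {perm T} | [forall S : {set T}, (#|S| == p) ==> (s @: S \notin L S)]].

Definition prob_good (T : finType) (p : nat) (L : {set T} -> {set {set T}}) : R :=
  (INR #|good_perms p L| / INR #|[set: {perm T}]|)%R.

Definition lower_bound (r p k : nat) : R :=
  ((1 - 2 * INR k / INR 'C(r, p)) ^ 'C(r, p))%R.

(* Main.v *)
From Stdlib Require Import Reals Lra.

Lemma pow_exp (x : R) (n : nat) : (exp x ^ n = exp (INR n * x))%R.
Proof.
induction n as [|n IH].
- simpl; rewrite Rmult_0_l, exp_0; reflexivity.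
- rewrite S_INR; simpl pow; rewrite IH, <- exp_plus; f_equal; ring.
Qed.

Lemma div_nonneg (a b : R) : (0 <= a)%R -> (0 < b)%R -> (0 <= a / b)%R.
Proof. intros ha hb; unfold Rdiv; apply Rmult_le_pos; [exact ha | left; apply Rinv_0_lt_compat; exact hb]. Qed.

Lemma pow_bounds (c m : R) (n : nat) : m = INR n -> (0 <= c)%R -> (c < m)%R ->
  (exp (- c) * (1 - c * c / (m - c)) <= (1 - c / m) ^ n <= exp (- c))%R.
Proof.
intros hm hc hcm.
assert (hm0 : (0 < m)%R) by lra.
assert (hb : (0 <= 1 - c / m)%R).
{ apply (Rmult_le_reg_r m); [lra|]. unfold Rdiv. field_simplify; lra. }
split.
- set (t := (c / (m - c))%R).
  assert (ht : (0 <= t)%R) by (unfold t; apply div_nonneg; lra).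
  assert (h1 : (m / (m - c) <= exp t)%R).
  { assert (e := exp_ineq1_le t). replace (m / (m - c))%R with (1 + t)%R by (unfold t; field; lra). lra. }
  assert (h2 : (exp (- t) <= 1 - c / m)%R).
  { rewrite exp_Ropp. replace (1 - c / m)%R with (/ (m / (m - c)))%R by (field; lra).
    apply Rinv_le_contravar; [apply Rdiv_lt_0_compat; lra | exact h1]. }
  assert (h3 : (exp (- t) ^ n <= (1 - c / m) ^ n)%R).
  { apply pow_incr. split; [left; apply exp_pos | exact h2]. }
  rewrite pow_exp, <- hm in h3.
  replace (m * - t)%R with (- c + - (c * t))%R in h3 by (unfold t; field; lra).
  rewrite exp_plus in h3.
  assert (h4 := exp_ineq1_le (- (c * t))).
  assert (h5 := exp_pos (- c)).
  replace (c * c / (m - c))%R with (c * t)%R by (unfold t; field; lra).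
  nra.
- assert (h1 := exp_ineq1_le (- c / m)).
  assert (h2 : ((1 - c / m) ^ n <= exp (- c / m) ^ n)%R).
  { apply pow_incr. split; [exact hb|]. unfold Rdiv in *. lra. }
  rewrite pow_exp, <- hm in h2.
  replace (m * (- c / m))%R with (- c)%R in h2 by (field; lra).
  exact h2.
Qed.

Lemma lim_part (c : R) (u : nat -> nat) : (0 <= c)%R ->
  (forall M, exists R0, forall r, (R0 <= r)%nat -> (M <= u r)%nat) ->
  Un_cv (fun r => (1 - c / INR (u r)) ^ (u r))%R (exp (- c)).
Proof.
intros hc hu eps heps.
destruct (INR_unbounded (c + 1 + c * c / eps)) as [M0 hM0].
destruct (hu M0) as [R0 hR0].
exists R0. intros r hr.
assert (hM : (INR M0 <= INR (u r))%R) by (apply le_INR; apply hR0; exact hr).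
set (m := INR (u r)) in *.
assert (hcd : (0 <= c * c / eps)%R) by (apply div_nonneg; nra).
assert (hcm : (c < m)%R) by lra.
destruct (pow_bounds c m (u r) eq_refl hc hcm) as [hl hu2].
unfold Rdist. rewrite Rabs_left1; [|lra].
assert (hq : (c * c / (m - c) < eps)%R).
{ apply (Rmult_lt_reg_r (m - c)); [lra|].
  unfold Rdiv. rewrite Rmult_assoc, Rinv_l; [|lra].
  assert (hh : (c * c / eps * eps = c * c)%R) by (field; lra).
  assert (hh2 : (eps * (c * c / eps + 1) <= eps * (m - c))%R) by (apply Rmult_le_compat_l; lra).
  nra. }
assert (he : (exp (- c) <= 1)%R).
{ rewrite exp_Ropp. rewrite <- Rinv_1. apply Rinv_le_contravar; [lra|].
  assert (h := exp_ineq1_le c). lra. }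
assert (he0 := exp_pos (- c)).
assert (hq0 : (0 <= c * c / (m - c))%R) by (apply div_nonneg; nra).
nra.
Qed.


Require Import Defs.
From mathcomp Require Import all_boot fingroup perm.
From Stdlib Require Import Reals Lra.
Set Implicit Arguments. Unset Strict Implicit. Unset Printing Implicit Defensive.

Lemma mem_imset_tperm (T : finType) (a b x : T) (A : {set T}) :
  (x \in tperm a b @: A) = (tperm a b x \in A).
Proof.
apply/imsetP/idP => [[y yA ->]|h]; first by rewrite tpermK.
by exists (tperm a b x); rewrite ?tpermK.
Qed.

Lemma exists_swap (T : finType) (A B : {set T}) : #|A| = #|B| ->
  exists pi : {perm T}, pi @: A = B /\ (forall z, z \notin A -> z \notin B -> pi z = z).
Proof.
move eqn: #|A :\: B| => n; elim: n A eqn => [|n IH] A eqn cAB.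
  exists 1%g; split => [|z _ _]; last by rewrite perm1.
  have sAB : A \subset B by rewrite -setD_eq0 -cards_eq0 eqn.
  have -> : A = B by apply/eqP; rewrite eqEcard sAB cAB leqnn.
  by apply/setP => x; apply/imsetP/idP => [[y yA ->]|xA]; [rewrite perm1 | exists x; rewrite ?perm1].
have : (0 < #|A :\: B|)%N by rewrite eqn.
rewrite card_gt0 => /set0Pn [a]; rewrite inE => /andP [aB aA].
have : (0 < #|B :\: A|)%N.
  have e : #|A :\: B| = #|B :\: A| by rewrite !cardsD cAB setIC.
  by rewrite -e eqn.
rewrite card_gt0 => /set0Pn [b]; rewrite inE => /andP [bA bB].
have ab : a != b by apply: contraNneq aB => ->.
pose t := tperm a b.
have eq1 : #|t @: A :\: B| = n.
  have -> : t @: A :\: B = (A :\: B) :\ a.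
    apply/setP => x; rewrite !inE mem_imset_tperm.
    case: (tpermP a b x) => [->|->|/eqP xa /eqP xb]; rewrite ?eqxx ?bB ?aA ?aB ?xa //= ?(negbTE bA) ?andbF //; by case: (x \in B).
  by move: (cardsD1 a (A :\: B)); rewrite !inE aA aB eqn add1n => -[] ->.
have ct : #|t @: A| = #|B| by rewrite card_imset ?cAB //; exact: perm_inj.
have [pi' [piA pifix]] := IH _ eq1 ct.
exists (t * pi')%g; split.
  rewrite -piA; apply/setP => x; apply/imsetP/imsetP => [[y yA ->]|[y yA ->]].
    by exists (t y); [apply/imsetP; exists y|rewrite permM].
  case/imsetP: yA => z zA ->; exists z => //; by rewrite permM.
move=> z zA zB.
have za : z != a by apply: contraNneq zA => ->.
have zb : z != b by apply: contraNneq zB => ->.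
rewrite permM tpermD 1?eq_sym // pifix //.
by rewrite mem_imset_tperm tpermD 1?eq_sym.
Qed.


Section Lop.
Variable T : finType.

Definition ev (S A : {set T}) : {set {perm T}} := [set s : {perm T} | s @: S == A].
Definition Gs (J : {set {set T} * {set T}}) : {set {perm T}} :=
  [set s : {perm T} | [forall j in J, s @: j.1 != j.2]].

Lemma imsetMperm (s t : {perm T}) (X : {set T}) : (s * t)%g @: X = t @: (s @: X).
Proof. by rewrite -imset_comp; apply: eq_imset => x; rewrite permM. Qed.

Lemma lop (p : nat) (S A : {set T}) (J : {set {set T} * {set T}}) :
  #|S| = p -> #|A| = p ->
  (forall j, j \in J -> [disjoint j.1 & S] && [disjoint j.2 & A]) ->
  ('C(#|T|, p) * #|ev S A :&: Gs J| <= #|Gs J|)%N.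
Proof.
move=> cS cA dJ.
pose P := [set B : {set T} | #|B| == p].
have -> : #|Gs J| = (\sum_(B in P) #|[set s in Gs J | s @: S == B]|)%N.
  rewrite -sum1_card (partition_big (fun s : {perm T} => s @: S) (mem P)) /=.
    by apply: eq_bigr => B _; rewrite -sum1_card; apply: eq_bigl => s; rewrite !inE.
  by move=> s _; rewrite inE card_imset ?cS //; exact: perm_inj.
rewrite -card_draws -sum_nat_const; apply: leq_sum => B; rewrite inE => /eqP cB.
have [pi [piA pifix]] := exists_swap (etrans cA (esym cB)).
rewrite -(card_imset _ (mulIg pi)); apply: subset_leq_card; apply/subsetP => s'.
case/imsetP => s; rewrite !inE => /andP [/eqP sS /forall_inP sG] ->.
have sB : (s * pi)%g @: S = B by rewrite imsetMperm sS.
rewrite sB eqxx andbT; apply/forall_inP => j jJ; apply/negP => /eqP ej.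
have /andP [d1 d2] := dJ j jJ.
have: s @: j.1 == j.2; last by move/negP: (sG j jJ).
rewrite -ej; apply/eqP; apply: eq_in_imset => y yj.
have zj : (s * pi)%g y \in j.2 by rewrite -ej; apply/imsetP; exists y.
have zA : (s * pi)%g y \notin A by rewrite (disjointFr d2 zj).
have zB : (s * pi)%g y \notin B.
  rewrite -sB; apply/imsetP => -[y' y'S] /perm_inj eyy.
  by move: yj; rewrite eyy (disjointFl d1 y'S).
by rewrite permM; move: (pifix _ zA zB); rewrite permM => /perm_inj.
Qed.
End Lop.


Lemma pow_decr (y : R) (m n : nat) : (0 <= y <= 1)%R -> (m <= n)%N -> (y ^ n <= y ^ m)%R.
Proof.
move=> hy /subnKC <-; elim: (n - m)%N => [|k IH]; first by rewrite addn0; lra.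
rewrite addnS /=.
have h1 : (0 <= y ^ (m + k))%R by apply: pow_le; lra.
nra.
Qed.

Lemma INR_card_le (T : finType) (A B : {set T}) : A \subset B -> (INR #|A| <= INR #|B|)%R.
Proof. by move=> /subset_leq_card /leP; apply: le_INR. Qed.

Section LLL.
Variables (Om Idx : finType) (E : Idx -> {set Om}) (nb : Idx -> Idx -> bool)
  (D : {set Idx}) (x q : R).
Definition GG (J : {set Idx}) : {set Om} := [set s | [forall j in J, s \notin E j]].
Hypothesis hx0 : (0 <= x)%R.
Hypothesis hx1 : (x < 1)%R.
Hypothesis hq0 : (0 <= q)%R.
Hypothesis hlop : forall i (J : {set Idx}), i \in D -> J \subset D -> (forall j, j \in J -> ~~ nb i j) ->
  (INR #|E i :&: GG J| <= q * INR #|GG J|)%R.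
Hypothesis hq : forall i, i \in D -> (q <= x * (1 - x) ^ #|[set j in D | nb i j]|)%R.

Lemma GG_sub (J K : {set Idx}) : J \subset K -> GG K \subset GG J.
Proof.
move=> sJK; apply/subsetP => s; rewrite !inE => /forall_inP h.
by apply/forall_inP => j jJ; apply: h; apply: (subsetP sJK).
Qed.

Lemma GG_add (i : Idx) (J : {set Idx}) : GG (i |: J) = GG J :\: E i.
Proof.
apply/setP => s; rewrite !inE; apply/forall_inP/andP => [h|[/negP h1 /forall_inP h2] j].
  split; first by apply: h; rewrite !inE eqxx.
  by apply/forall_inP => j jJ; apply: h; rewrite !inE jJ orbT.
by rewrite !inE => /orP [/eqP ->|/h2 //]; apply/negP.
Qed.

Lemma card_GG_add (i : Idx) (J : {set Idx}) :
  INR #|GG (i |: J)| = (INR #|GG J| - INR #|E i :&: GG J|)%R.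
Proof.
rewrite GG_add -(cardsID (E i) (GG J)) plus_INR setIC; lra.
Qed.

Lemma lll_step n : forall J : {set Idx}, (#|J| <= n)%N -> J \subset D -> forall i, i \in D -> i \notin J ->
  (INR #|E i :&: GG J| <= x * INR #|GG J|)%R.
Proof.
elim: n => [|n IHn] J cJ sJD i iD iJ.
  move: cJ; rewrite leqn0 cards_eq0 => /eqP ->.
  have := hlop iD (sub0set D) (fun j => ltac:(by rewrite inE)).
  have := hq iD; set d := #|_| => h1 h2.
  have h3 : (0 <= (1 - x) ^ d <= 1)%R by split; [apply: pow_le; lra | have := @pow_decr (1 - x) 0 d ltac:(lra) (leq0n d); rewrite /=; lra].
  have h4 : (0 <= INR #|GG set0|)%R by apply: pos_INR.
  set g := INR #|GG set0| in h2 h4 *.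
  have h5 : (q * g <= x * (1 - x) ^ d * g)%R by apply: Rmult_le_compat_r.
  have h6 : (x * (1 - x) ^ d * g <= x * g)%R.
    rewrite Rmult_assoc; apply: Rmult_le_compat_l => //.
    rewrite -{2}(Rmult_1_l g); apply: Rmult_le_compat_r => //; lra.
  lra.
have IH' : forall (K : {set Idx}) j, (#|K| < #|J|)%N -> K \subset D -> j \in D -> j \notin K ->
    ((1 - x) * INR #|GG K| <= INR #|GG (j |: K)|)%R.
  move=> K j cK sKD jD jK; rewrite card_GG_add.
  have := IHn K (leq_trans cK cJ) sKD j jD jK; lra.
pose J1 := [set j in J | nb i j]; pose J2 := [set j in J | ~~ nb i j].
have sJ2J : J2 \subset J by apply/subsetP => j; rewrite inE => /andP [].
have grow : forall m (M : {set Idx}), #|M| = m -> M \subset J1 ->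
    ((1 - x) ^ m * INR #|GG J2| <= INR #|GG (J2 :|: M)|)%R.
  elim=> [|m IHm] M cM sM.
    by move/eqP: cM; rewrite cards_eq0 => /eqP ->; rewrite setU0 /=; lra.
  have : (0 < #|M|)%N by rewrite cM.
  rewrite card_gt0 => /set0Pn [a aM].
  have aJ1 := subsetP sM a aM; move: (aJ1); rewrite inE => /andP [aJ nba].
  have cM' : #|M :\ a| = m by move: cM; rewrite (cardsD1 a M) aM add1n => -[].
  have sM' : M :\ a \subset J1 by apply: subset_trans sM; apply: subD1set.
  have h1 := IHm _ cM' sM'.
  have eM : J2 :|: M = a |: (J2 :|: M :\ a).
    apply/setP => y; rewrite !inE; case: (eqVneq y a) => [->|]; first by rewrite aM !orbT.
    by rewrite /=.
  have sub1 : J2 :|: M :\ a \subset J :\ a.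
    apply/subsetP => y; rewrite !inE => /orP [/andP [yJ nby]|/andP [ya yM]].
      by rewrite yJ andbT; apply: contraNneq nby => ->.
    by rewrite ya; move: (subsetP sM y yM); rewrite inE => /andP [].
  have cK : (#|J2 :|: M :\ a| < #|J|)%N.
    apply: leq_ltn_trans (subset_leq_card sub1) _.
    by rewrite (cardsD1 a J) aJ add1n ltnS leqnn.
  have sKD : J2 :|: M :\ a \subset D.
    by apply: subset_trans sJD; apply: subset_trans sub1 _; apply: subD1set.
  have aK : a \notin J2 :|: M :\ a by rewrite !inE nba eqxx /= andbF.
  have := IH' _ a cK sKD (subsetP sJD a aJ) aK.
  rewrite -eM /=.
  have : (0 <= 1 - x)%R by lra.
  nra.
have eJ : J2 :|: J1 = J.
  apply/setP => y; rewrite !inE; by case: (y \in J); case: (nb i y).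
have hg := grow _ J1 (erefl _) (subxx _); rewrite eJ in hg.
set d := #|[set j in D | nb i j]|.
have cJ1 : (#|J1| <= d)%N.
  apply: subset_leq_card; apply/subsetP => j; rewrite !inE => /andP [jJ ->].
  by rewrite (subsetP sJD j jJ).
have hpow := @pow_decr (1 - x) _ _ ltac:(lra) cJ1.
have h1 : (INR #|E i :&: GG J| <= INR #|E i :&: GG J2|)%R.
  by apply: INR_card_le; apply: setIS; apply: GG_sub.
have h2 : (INR #|E i :&: GG J2| <= q * INR #|GG J2|)%R.
  apply: hlop => //; first by apply: subset_trans sJD.
  by move=> j; rewrite inE => /andP [].
have h3 := hq iD; rewrite -/d in h3.
have hd : (0 < (1 - x) ^ d)%R by apply: pow_lt; lra.
have hG2 : (0 <= INR #|GG J2|)%R by apply: pos_INR.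
have hG : (0 <= INR #|GG J|)%R by apply: pos_INR.
have hE : (0 <= INR #|E i :&: GG J|)%R by apply: pos_INR.
move: h1 h2 h3 hd hG2 hG hE hpow hg.
set a1 := INR #|E i :&: GG J|; set a2 := INR #|E i :&: GG J2|.
set g2 := INR #|GG J2|; set g := INR #|GG J|.
set P1 := ((1 - x) ^ d)%R; set Pm := ((1 - x) ^ #|J1|)%R.
move=> h1 h2 h3 hd hG2 hG hE hpow hg.
have k1 : (P1 * a1 <= q * g)%R.
  apply: Rle_trans (_ : P1 * (q * g2) <= _)%R; first by nra.
  apply: Rle_trans (_ : q * (Pm * g2) <= _)%R; nra.
have k2 : (P1 * a1 <= P1 * (x * g))%R by nra.
by apply: Rmult_le_reg_l k2.
Qed.

Lemma lll_final m : forall J : {set Idx}, #|J| = m -> J \subset D ->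
  ((1 - x) ^ m * INR #|Om| <= INR #|GG J|)%R.
Proof.
elim: m => [|m IHm] J cJ sJD.
  move/eqP: cJ; rewrite cards_eq0 => /eqP ->.
  have -> : GG set0 = setT by apply/setP => s; rewrite !inE; apply/forall_inP => j; rewrite inE.
  by rewrite cardsT /=; lra.
have : (0 < #|J|)%N by rewrite cJ.
rewrite card_gt0 => /set0Pn [a aJ].
have cJ' : #|J :\ a| = m by move: cJ; rewrite (cardsD1 a J) aJ add1n => -[].
have sJ' : J :\ a \subset D by apply: subset_trans sJD; apply: subD1set.
have h1 := IHm _ cJ' sJ'.
have eJ : J = a |: (J :\ a) by rewrite setD1K.
have h2 := @lll_step #|J :\ a| (J :\ a) (leqnn _) sJ' a (subsetP sJD a aJ) ltac:(by rewrite !inE eqxx).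
rewrite eJ card_GG_add /=.
have h3 := Rmult_le_compat_l (1 - x) _ _ ltac:(lra) h1.
rewrite -Rmult_assoc in h3.
set G0 := INR #|GG (J :\ a)| in h1 h2 h3 *. set E0 := INR #|E a :&: GG (J :\ a)| in h2 *.
apply: Rle_trans h3 _; rewrite Rmult_minus_distr_r Rmult_1_l; lra.
Qed.
End LLL.


Lemma card_partition_le (I X : finType) (D : {set I}) (f : I -> X) (Q : {set X}) (g : X -> nat) :
  (forall j, j \in D -> f j \in Q) ->
  (forall x, x \in Q -> #|[set j in D | f j == x]| <= g x) ->
  #|D| <= \sum_(x in Q) g x.
Proof.
move=> hf hg; rewrite -sum1_card (partition_big f (mem Q)) //=.
apply: leq_sum => x xQ; apply: leq_trans (hg x xQ).
rewrite sum1_card; apply: subset_leq_card; apply/subsetP => j; rewrite !inE.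
by [].
Qed.

Lemma card_exists_le (X Y : finType) (W : {set X}) (S : {set Y}) (F : Y -> {set X}) :
  (forall w, w \in W -> exists2 y, y \in S & w \in F y) ->
  #|W| <= \sum_(y in S) #|F y|.
Proof.
move=> hW; rewrite -sum1_card.
apply: leq_trans (_ : \sum_(w in W) \sum_(y in S) (w \in F y : nat) <= _).
  apply: leq_sum => w wW; have [y yS wF] := hW w wW.
  by rewrite (bigD1 y) //= wF.
rewrite exchange_big; apply: leq_sum => y _.
rewrite -big_mkcondr /= sum1_card; apply: subset_leq_card.
by apply/subsetP => w; rewrite unfold_in => /andP [].
Qed.

Lemma card_Py (T : finType) (p : nat) (y : T) : (0 < p)%N ->
  #|[set S : {set T} | (#|S| == p) && (y \in S)]| <= 'C(#|T|.-1, p.-1).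
Proof.
move=> p0.
pose T' : finType := {z : T | z != y}.
pose f (B : {set T'}) : {set T} := y |: [set val z | z in B].
have cT' : #|T'| = #|T|.-1 by rewrite card_sig -(cardC1 y); apply: eq_card => z; rewrite !inE.
have cf : forall B, #|f B| = #|B|.+1.
  move=> B; rewrite /f cardsU1 card_imset; last exact: val_inj.
  have -> : y \notin [set val z | z in B].
    by apply/imsetP => -[z _ ezy]; move: (valP z); rewrite /= -ezy eqxx.
  by [].
rewrite -cT' -card_draws.
apply: leq_trans (_ : _ <= #|f @: [set B : {set T'} | #|B| == p.-1]|) _; last first.
  exact: leq_imset_card.
apply: subset_leq_card; apply/subsetP => S; rewrite inE => /andP [/eqP cS yS].
pose B := [set z : T' | val z \in S].
have eS : f B = S.
  apply/setP => x; rewrite /f !inE; case: (eqVneq x y) => [->|xy]; first by rewrite yS.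
  rewrite /=; apply/imsetP/idP => [[z]|xS]; first by rewrite inE => zS ->.
  by exists (exist _ x xy); rewrite ?inE.
apply/imsetP; exists B => //; rewrite inE; apply/eqP.
by move: (cf B); rewrite eS cS; case: (p) p0 => // m _ [->].
Qed.

Lemma sum_INR_le (X : finType) (Q : {set X}) (g : X -> nat) (rho : R) :
  (forall x, x \in Q -> (INR (g x) <= rho)%R) ->
  (INR (\sum_(x in Q) g x) <= INR #|Q| * rho)%R.
Proof.
move=> h; rewrite -big_enum cardE.
have : forall x, x \in enum Q -> (INR (g x) <= rho)%R by move=> x; rewrite mem_enum; apply: h.
elim: (enum Q) => [|a s IH] hs; first by rewrite big_nil /=; lra.
rewrite big_cons plus_INR (_ : size (a :: s) = (size s).+1) // S_INR.
have h1 := hs a (mem_head a s).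
have h2 := IH (fun x xs => hs x (@mem_behead _ (a :: s) x xs)).
lra.
Qed.

Lemma bernoulli (x : R) (d : nat) : (0 <= x <= 1)%R -> (1 - INR d * x <= (1 - x) ^ d)%R.
Proof.
move=> hx; elim: d => [|d IH]; first by rewrite /=; lra.
rewrite S_INR /=.
have h0 : (0 <= (1 - x) ^ d)%R by apply: pow_le; lra.
have h1 : (0 <= INR d)%R by apply: pos_INR.
nra.
Qed.


Section Main.
Variables (T : finType) (p k : nat) (L : {set T} -> {set {set T}}) (rho : R).
Hypothesis p0 : (0 < p)%N.
Hypothesis hL : forall S : {set T}, #|S| = p ->
  (#|L S| <= k)%N /\ (forall A : {set T}, A \in L S -> #|A| = p).
Hypothesis hrho : forall A : {set T}, #|A| = p ->
  (INR #|[set S : {set T} | (#|S| == p) && (A \in L S)]| <= rho)%R.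
Hypothesis rho0 : (0 <= rho)%R.
Let n := 'C(#|T|, p).
Let c := 'C(#|T|.-1, p.-1).
Hypothesis hn : (2 * INR k + 3 <= INR n)%R.
Hypothesis hdeg : (4 * (INR p * INR c * (INR k + rho)) <= INR n)%R.

Let Idx := ({set T} * {set T})%type.
Let D : {set Idx} := [set i : Idx | (#|i.1| == p) && (i.2 \in L i.1)].
Let E (i : Idx) : {set {perm T}} := ev i.1 i.2.
Let nb (i j : Idx) : bool := ~~ [disjoint i.1 & j.1] || ~~ [disjoint i.2 & j.2].

Lemma GG_Gs (J : {set Idx}) : GG E J = Gs J.
Proof. by apply/setP => s; rewrite !inE; apply: eq_forallb => j; rewrite /E inE. Qed.

Lemma good_GG : good_perms p L = GG E D.
Proof.
apply/setP => s; rewrite !inE; apply/forallP/forall_inP => [h j|h S].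
  rewrite inE => /andP [cS jL]; rewrite /E inE; apply/negP => /eqP e.
  by move: (h j.1); rewrite cS e jL.
apply/implyP => cS; apply/negP => inL.
by move: (h (S, s @: S)); rewrite inE cS inL /E inE eqxx => /(_ isT).
Qed.

Lemma Dsize (j : Idx) : j \in D -> #|j.1| = p /\ #|j.2| = p.
Proof.
rewrite inE => /andP [/eqP cS jL]; split => //.
by apply: (proj2 (hL cS)).
Qed.

Lemma cardD : (#|D| <= n * k)%N.
Proof.
rewrite /n -card_draws -sum_nat_const.
apply: (card_partition_le (f := fst)).
  by move=> j /Dsize [c1 _]; rewrite inE c1.
move=> S; rewrite inE => /eqP cS.
apply: leq_trans (_ : _ <= #|(fun A => (S, A)) @: L S|) _.
  apply: subset_leq_card; apply/subsetP => j; rewrite !inE => /andP [/andP [_ jL] /eqP e].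
  by apply/imsetP; exists j.2; rewrite -?e //; case: (j) e => a b /= ->.
rewrite card_imset; first exact: (proj1 (hL cS)).
by move=> a b [].
Qed.

Lemma U1_bound (i : Idx) : i \in D ->
  (#|[set j in D | ~~ [disjoint i.1 & j.1]]| <= p * (c * k))%N.
Proof.
move=> /Dsize [c1 c2].
apply: leq_trans (_ : _ <= \sum_(y in i.1) #|[set j in D | y \in j.1]|)%N _.
  apply: card_exists_le => j /setIdP [jD].
  rewrite -setI_eq0 => /set0Pn [y]; rewrite inE => /andP [y1 y2].
  by exists y => //; rewrite inE jD y2.
rewrite -c1 -sum_nat_const; apply: leq_sum => y _.
apply: leq_trans (_ : _ <= \sum_(S in [set S : {set T} | (#|S| == p) && (y \in S)]) k)%N _.
  apply: (card_partition_le (f := fst)).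
    by move=> j /setIdP [/Dsize [cj _] yj]; rewrite inE cj eqxx.
  move=> S; rewrite inE => /andP [/eqP cS _].
  apply: leq_trans (_ : _ <= #|(fun A => (S, A)) @: L S|) _.
    apply: subset_leq_card; apply/subsetP => j; rewrite !inE => /andP [/andP [/andP [_ jL] _] /eqP e].
    by apply/imsetP; exists j.2; rewrite -?e //; case: (j) e => a b /= ->.
  rewrite card_imset; first exact: (proj1 (hL cS)).
  by move=> a b [].
rewrite sum_nat_const; apply: leq_mul => //; exact: card_Py.
Qed.

Lemma U2_bound (i : Idx) : i \in D ->
  (INR #|[set j in D | ~~ [disjoint i.2 & j.2]]| <= INR p * (INR c * rho))%R.
Proof.
move=> /Dsize [c1 c2].
apply: Rle_trans (_ : _ <= INR (\sum_(y in i.2) #|[set j in D | y \in j.2]|))%R _.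
  apply: le_INR; apply/leP; apply: card_exists_le => j /setIdP [jD].
  rewrite -setI_eq0 => /set0Pn [y]; rewrite inE => /andP [y1 y2].
  by exists y => //; rewrite inE jD y2.
rewrite -c2; apply: sum_INR_le => y _.
apply: Rle_trans (_ : _ <= INR (\sum_(A in [set S : {set T} | (#|S| == p) && (y \in S)])
    #|[set S : {set T} | (#|S| == p) && (A \in L S)]|))%R _.
  apply: le_INR; apply/leP.
  apply: (card_partition_le (f := snd)).
    by move=> j /setIdP [/Dsize [_ cj] yj]; rewrite inE cj eqxx.
  move=> A; rewrite inE => /andP [/eqP cA _].
  apply: leq_trans (_ : _ <= #|(fun S => (S, A)) @: [set S : {set T} | (#|S| == p) && (A \in L S)]|) _.
    apply: subset_leq_card; apply/subsetP => j; rewrite !inE => /andP [/andP [/andP [cj jL] _] /eqP e].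
    apply/imsetP; exists j.1; first by rewrite inE cj -e jL.
    by case: (j) e => a b /= ->.
  by rewrite card_imset // => a b [].
apply: Rle_trans (_ : _ <= INR #|[set S : {set T} | (#|S| == p) && (y \in S)]| * rho)%R _.
  apply: sum_INR_le => A; rewrite inE => /andP [/eqP cA _]; exact: hrho.
apply: Rmult_le_compat_r => //; apply: le_INR; apply/leP; exact: card_Py.
Qed.

Lemma deg_bound (i : Idx) : i \in D ->
  (4 * INR #|[set j in D | nb i j]| <= INR n)%R.
Proof.
move=> iD.
have h1 : (#|[set j in D | nb i j]| <= #|[set j in D | ~~ [disjoint i.1 & j.1]]| +
    #|[set j in D | ~~ [disjoint i.2 & j.2]]|)%N.
  apply: leq_trans (_ : _ <= #|[set j in D | ~~ [disjoint i.1 & j.1]] :|: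
     [set j in D | ~~ [disjoint i.2 & j.2]]|)%N _.
    apply: subset_leq_card; apply/subsetP => j; rewrite !inE /nb.
    by move=> /andP [-> /orP [->|->]]; rewrite ?orbT.
  by rewrite cardsU leq_subr.
have h2 := U1_bound iD; have h3 := U2_bound iD.
move/leP: h1 => /le_INR; rewrite plus_INR => h1.
move/leP: h2 => /le_INR; rewrite -!multE !mult_INR => h2.
have : (INR #|[set j in D | nb i j]| <= INR p * INR c * (INR k + rho))%R by nra.
lra.
Qed.

Lemma main_bound : (lower_bound #|T| p k <= prob_good p L)%R.
Proof.
have n3 : (3 <= INR n)%R by have := pos_INR k; lra.
pose x := (2 / INR n)%R; pose q := (1 / INR n)%R.
have hx0 : (0 <= x)%R by apply: div_nonneg; lra.
have hx1 : (x < 1)%R by rewrite /x; apply: (Rmult_lt_reg_r (INR n)); [lra|]; field_simplify; lra.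
have hq0 : (0 <= q)%R by apply: div_nonneg; lra.
have hlop : forall i (J : {set Idx}), i \in D -> J \subset D -> (forall j, j \in J -> ~~ nb i j) ->
    (INR #|E i :&: GG E J| <= q * INR #|GG E J|)%R.
  move=> i J iD sJ hJ; rewrite !GG_Gs.
  have [c1 c2] := Dsize iD.
  have := lop c1 c2 (J := J) _.
  move=> /(_ _) h.
  have {h} h : ('C(#|T|, p) * #|ev i.1 i.2 :&: Gs J| <= #|Gs J|)%N.
    apply: h => j jJ; move: (hJ j jJ); rewrite /nb negb_or !negbK => /andP [d1 d2].
    by rewrite disjoint_sym d1 disjoint_sym d2.
  move/leP: h => /le_INR; rewrite -multE mult_INR -/n => h.
  rewrite /q /E; apply: (Rmult_le_reg_l (INR n)); first lra.
  rewrite -Rmult_assoc /Rdiv Rmult_1_l Rinv_r ?Rmult_1_l; [exact: h|lra].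
have hq : forall i, i \in D -> (q <= x * (1 - x) ^ #|[set j in D | nb i j]|)%R.
  move=> i iD; have hd := deg_bound iD.
  have hb := @bernoulli x #|[set j in D | nb i j]| ltac:(lra).
  have : (1 / 2 <= (1 - x) ^ #|[set j in D | nb i j]|)%R.
    apply: Rle_trans hb; rewrite /x.
    apply: (Rmult_le_reg_l (INR n)); first lra.
    field_simplify; lra.
  rewrite /q /x => h; apply: Rle_trans (_ : 2 / INR n * (1/2) <= _)%R.
    by right; field; lra.
  apply: Rmult_le_compat_l => //.
have hf := lll_final hx0 hx1 hq0 hlop hq (erefl #|D|) (subxx D).
rewrite /prob_good good_GG cardsT.
have pp : (0 < INR #|{perm T}|)%R.
  by apply: lt_0_INR; apply/ltP; apply/card_gt0P; exists 1%g.
apply: (Rmult_le_reg_r (INR #|{perm T}|)) => //.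
rewrite /Rdiv Rmult_assoc Rinv_l ?Rmult_1_r; last by apply: Rgt_not_eq.
apply: Rle_trans hf; apply: Rmult_le_compat_r; first lra.
have hk : (0 <= 1 - INR k * x <= (1 - x) ^ k)%R.
  split; last by apply: bernoulli; lra.
  rewrite /x; apply: (Rmult_le_reg_l (INR n)); first lra.
  field_simplify; have := pos_INR k; lra.
apply: Rle_trans (_ : ((1 - x) ^ k) ^ n <= _)%R.
  rewrite /lower_bound -/n.
  have -> : (1 - 2 * INR k / INR n = 1 - INR k * x)%R by rewrite /x; field; lra.
  by apply: pow_incr.
rewrite -pow_mult; apply: pow_decr; first lra.
by rewrite multE mulnC cardD.
Qed.
End Main.


Lemma exp_le (a b : R) : (a <= b)%R -> (exp a <= exp b)%R.
Proof. by case=> [h|->]; [left; apply: exp_increasing | right]. Qed.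

Lemma ln_le' (a b : R) : (0 < a)%R -> (a <= b)%R -> (ln a <= ln b)%R.
Proof. by move=> a0 [h|->]; [left; apply: ln_increasing | right]. Qed.

Lemma p0_case (T : finType) (k : nat) (L : {set T} -> {set {set T}}) :
  (forall S : {set T}, #|S| = 0 -> (#|L S| <= k)%N) ->
  (lower_bound #|T| 0 k <= prob_good 0 L)%R.
Proof.
move=> hL; rewrite /lower_bound bin0 /= Rmult_1_r /Rdiv Rinv_1 Rmult_1_r.
have pg : (0 <= prob_good 0 L)%R.
  rewrite /prob_good /Rdiv; apply: Rmult_le_pos; first exact: pos_INR.
  by left; apply: Rinv_0_lt_compat; apply: lt_0_INR; apply/ltP; apply/card_gt0P; exists 1%g; rewrite inE.
case: k hL => [|k] hL; last by rewrite S_INR; have := pos_INR k; lra.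
rewrite /prob_good.
have -> : good_perms 0 L = [set: {perm T}].
  apply/setP => s; rewrite !inE; apply/forallP => S; apply/implyP => /eqP cS.
  by move: (hL S cS); rewrite leqn0 cards_eq0 => /eqP ->; rewrite inE.
rewrite /Rdiv Rinv_r /=; first lra.
by apply: Rgt_not_eq; apply: lt_0_INR; apply/ltP; apply/card_gt0P; exists 1%g; rewrite inE.
Qed.

Lemma bin_id (r p : nat) : (0 < p)%N -> (r * 'C(r.-1, p.-1) = p * 'C(r, p))%N.
Proof. by case: p => // p _; rewrite mul_bin_diag. Qed.

Theorem lemma1 (p k : nat) (alpha : R) :
  (alpha < 1)%R ->
  (exists N : nat,
     forall (T : finType) (L : {set T} -> {set {set T}}),
       (N <= #|T|)%N ->
       (forall S : {set T}, #|S| = p ->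
          (#|L S| <= k)%N /\ (forall A : {set T}, A \in L S -> #|A| = p)) ->
       (forall A : {set T}, #|A| = p ->
          (INR #|[set S : {set T} | (#|S| == p) && (A \in L S)]|
             <= Rpower (INR #|T|) alpha)%R) ->
       (lower_bound #|T| p k <= prob_good p L)%R)
  /\
  ((0 < p)%N ->
     Un_cv (fun r : nat => lower_bound r p k) (exp (- (2 * INR k)))).
Proof.
move=> ha; split.
  have [p_0|p0] := posnP p.
    rewrite p_0.
    by exists 0%N => T L _ hL _; apply: p0_case => S cS; case: (hL S cS).
  pose K := (INR (8 * p * p))%R.
  have K1 : (1 <= K)%R.
    by rewrite /K -/(INR 1); apply: le_INR; apply/leP; rewrite muln_gt0 muln_gt0 p0.
  have [M0 hM0] := INR_unbounded (exp (ln K / (1 - alpha))).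
  exists (maxn (maxn M0 (8 * p * p * k)) (p * (2 * k + 3))) => T L hN hL hrho.
  set r := #|T| in hN hrho *.
  move: hN; rewrite !geq_max => /andP [/andP [hM hk] hr].
  have r0 : (0 < r)%N by apply: (leq_trans _ hr); rewrite muln_gt0 p0 addn3.
  have rR : (0 < INR r)%R by apply: lt_0_INR; apply/ltP.
  have pR : (1 <= INR p)%R by rewrite -/(INR 1); apply: le_INR; apply/leP.
  pose rho := Rpower (INR r) alpha.
  have rho0 : (0 <= rho)%R by left; apply: exp_pos.
  have hrhoK : (K * rho <= INR r)%R.
    have eK : K = exp (ln K) by rewrite exp_ln //; lra.
    have er : INR r = exp (ln (INR r)) by rewrite exp_ln.
    rewrite /rho /Rpower {1}eK {2}er -exp_plus; apply: exp_le.
    have hl : (ln K / (1 - alpha) <= ln (INR r))%R.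
      rewrite -{1}(ln_exp (ln K / (1 - alpha))); apply: ln_le'; first exact: exp_pos.
      apply: Rle_trans (Rlt_le _ _ hM0) _; apply: le_INR; apply/leP => //.
    have : (ln K <= (1 - alpha) * ln (INR r))%R.
      apply: (Rmult_le_reg_r (/ (1 - alpha))); first by apply: Rinv_0_lt_compat; lra.
      have -> : ((1 - alpha) * ln (INR r) * / (1 - alpha) = ln (INR r))%R.
        by field; apply: Rgt_not_eq; lra.
      exact: hl.
    lra.
  have kR : (INR (8 * p * p * k) <= INR r)%R by apply: le_INR; apply/leP.
  have hrR : (INR (p * (2 * k + 3)) <= INR r)%R by apply: le_INR; apply/leP.
  rewrite /K !mult_INR in K1 hrhoK kR; rewrite !mult_INR plus_INR mult_INR in hrR.
  have cid := bin_id r p0; move/(f_equal INR): cid; rewrite -!multE !mult_INR => cid.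
  have c1 : (1 <= INR 'C(r.-1, p.-1))%R.
    rewrite -/(INR 1); apply: le_INR; apply/leP; rewrite bin_gt0.
    by rewrite -!subn1 leq_sub2r // (leq_trans _ hr) // leq_pmulr // addn3.
  apply: (main_bound p0 hL (rho := rho)) => //.
    have h := Rmult_le_compat_l _ _ _ (Rlt_le _ _ rR) c1; rewrite Rmult_1_r in h.
    have : (INR r <= INR p * INR 'C(r, p))%R by lra.
    rewrite -/r; simpl INR in hrR |- *; nra.
  rewrite -/r; apply: (Rmult_le_reg_l (INR r)) => //.
  simpl INR in K1, hrhoK, kR.
  have hc0 : (0 <= INR 'C(r, p))%R by apply: pos_INR.
  have hrc : (INR r * (4 * (INR p * INR 'C(r.-1, p.-1) * (INR k + rho))) =
              4 * INR p * INR p * INR 'C(r, p) * (INR k + rho))%R.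
    have -> : (INR r * (4 * (INR p * INR 'C(r.-1, p.-1) * (INR k + rho))) =
       4 * INR p * (INR k + rho) * (INR r * INR 'C(r.-1, p.-1)))%R by ring.
    rewrite cid; ring.
  rewrite hrc.
  have h8 : (4 * INR p * INR p * (INR k + rho) <= INR r)%R by nra.
  nra.
move=> p0.
apply: (lim_part (2 * INR k) (fun r => 'C(r, p))); first by have := pos_INR k; lra.
move=> M; exists (maxn p (M * p)) => r /leP; rewrite geq_max => /andP [hp hM].
apply/leP; rewrite -(leq_pmul2r p0).
apply: leq_trans hM _; rewrite mulnC -bin_id //.
by apply: leq_pmulr; rewrite bin_gt0 -!subn1 leq_sub2r.
Qed.
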